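(* For any compilation chain for partial programs and any trace relation ${\sim}\subseteq\mathit{Trace}_S\times\mathit{Trace}_T$ with existential and universal images $\tilde\tau,\tilde\sigma$, the following are equivalent: (i) $\mathit{RSP}^{\tilde\tau}$: for every source partial program $P$ and every $\pi_S\subseteq\mathit{Trace}_S$, $P\models_R\pi_S$ implies $P{\downarrow}\models_R(\mathit{Safe}\circ\tilde\tau)(\pi_S)$; (ii) $\mathit{RSC}^{\sim}$: for every $P$, every target context $C_T$, every target trace $t$ and every finite prefix $m\le t$, if $C_T[P{\downarrow}]\rightsquigarrow t$ then there exist a source context $C_S$, a target trace $t'\ge m$ and a source trace $s\sim t'$ with $C_S[P]\rightsquigarrow s$; (iii) $\mathit{RSP}^{\tilde\sigma}$: for every $P$ and every target safety property $\pi_T$, $P\models_R\tilde\sigma(\pi_T)$ implies $P{\downarrow}\models_R\pi_T$.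
   Context: A compilation chain for partial programs consists of source partial programs $P$ and source contexts $C_S$, target partial programs and target contexts $C_T$, linking $C[P]$ into whole programs, sets $\mathit{Trace}_S,\mathit{Trace}_T$ of traces, semantics relations $W\rightsquigarrow t$ for whole programs, and a compiler $P\mapsto P{\downarrow}$. Traces are finite or infinite sequences of events; $m\le t$ means $m$ is a finite prefix of $t$ (and $t'\ge m$ means $m\le t'$). $P\models_R\pi$ iff for every context $C$ at the same level and every $t$, $C[P]\rightsquigarrow t$ implies $t\in\pi$. A target property $\pi$ is a safety property iff for every $t\notin\pi$ there is $m\le t$ such that every $t'$ with $m\le t'$ satisfies $t'\notin\pi$. $\mathit{Safe}(\pi)$ is the intersection of all target safety properties containing $\pi$. The existential image of $\sim$ is $\tilde\tau(\pi)=\{t\mid\exists s.\ s\sim t\wedge s\in\pi\}$ and its universal image is $\tilde\sigma(\pi)=\{s\mid\forall t.\ s\sim t\Rightarrow t\in\pi\}$. *)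

(* Defs.v *)
From Stdlib Require Import List.
Import ListNotations.
Set Implicit Arguments.

CoInductive trace (E : Type) : Type :=
| tnil : trace E
| tcons : E -> trace E -> trace E.
Arguments tnil {E}.

(* Finite prefixes are finite lists of events; [prefix m t] is  m <= t. *)
Inductive prefix (E : Type) : list E -> trace E -> Prop :=
| prefix_nil : forall t, prefix [] t
| prefix_cons : forall e m t, prefix m t -> prefix (e :: m) (tcons e t).

Record chain : Type := {
  EvS : Type;  EvT : Type;
  ProgS : Type; CtxS : Type; WholeS : Type;
  ProgT : Type; CtxT : Type; WholeT : Type;
  linkS : CtxS -> ProgS -> WholeS;
  linkT : CtxT -> ProgT -> WholeT;
  semS : WholeS -> trace EvS -> Prop;
  semT : WholeT -> trace EvT -> Prop;
  compile : ProgS -> ProgT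
}.

Definition prop (E : Type) := trace E -> Prop.

Definition rsatS {c : chain} (P : ProgS c) (pi : prop (EvS c)) : Prop :=
  forall (C : CtxS c) (t : trace (EvS c)), semS c (linkS c C P) t -> pi t.
Definition rsatT {c : chain} (P : ProgT c) (pi : prop (EvT c)) : Prop :=
  forall (C : CtxT c) (t : trace (EvT c)), semT c (linkT c C P) t -> pi t.

Definition safety (E : Type) (pi : prop E) : Prop :=
  forall t, ~ pi t -> exists m, prefix m t /\ forall t', prefix m t' -> ~ pi t'.

Definition Safe (E : Type) (pi : prop E) : prop E :=
  fun t => forall piT : prop E, safety piT -> (forall u, pi u -> piT u) -> piT t.

Definition tau_img (ES ET : Type) (rel : trace ES -> trace ET -> Prop)
  (pi : prop ES) : prop ET := fun t => exists s, rel s t /\ pi s.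
Definition sigma_img (ES ET : Type) (rel : trace ES -> trace ET -> Prop)
  (pi : prop ET) : prop ES := fun s => forall t, rel s t -> pi t.

Definition RSP_tau (c : chain) (rel : trace (EvS c) -> trace (EvT c) -> Prop) : Prop :=
  forall (P : ProgS c) (piS : prop (EvS c)),
    rsatS (c:=c) P piS -> rsatT (c:=c) (compile c P) (Safe (tau_img rel piS)).

Definition RSC (c : chain) (rel : trace (EvS c) -> trace (EvT c) -> Prop) : Prop :=
  forall (P : ProgS c) (CT : CtxT c) (t : trace (EvT c)) (m : list (EvT c)),
    prefix m t -> semT c (linkT c CT (compile c P)) t ->
    exists (CS : CtxS c) (t' : trace (EvT c)) (s : trace (EvS c)),
      prefix m t' /\ rel s t' /\ semS c (linkS c CS P) s.

Definition RSP_sigma (c : chain) (rel : trace (EvS c) -> trace (EvT c) -> Prop) : Prop :=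
  forall (P : ProgS c) (piT : prop (EvT c)),
    safety piT -> rsatS (c:=c) P (sigma_img rel piT) -> rsatT (c:=c) (compile c P) piT.

(* Main.v *)
Require Import Defs.
From Stdlib Require Import Classical.

Lemma notpref_safety {E : Type} (m : list E) : safety (fun t => ~ prefix m t).
Proof.
  intros t H. apply NNPP in H. exists m. split; auto.
Qed.

Theorem theorem5p2 (c : chain) (rel : trace (EvS c) -> trace (EvT c) -> Prop) :
  (RSP_tau c rel <-> RSC c rel) /\ (RSC c rel <-> RSP_sigma c rel).
Proof.
  split; split.
  - intros H P CT t m Hp Hs.
    apply NNPP; intro Hn.
    set (piS := fun s => exists CS, semS c (linkS c CS P) s).
    assert (Hr : rsatS (c:=c) P piS) by (intros C s Hs'; exists C; exact Hs').
    pose proof (H P piS Hr CT t Hs) as HS.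
    apply (HS (fun t' => ~ prefix m t') (notpref_safety m)); auto.
    intros u [s [Hrel [CS HsS]]] Hpu. apply Hn. exists CS, u, s. auto.
  - intros H P piS Hr CT t Hs piT Hsafe Hsub.
    apply NNPP; intro Hn.
    destruct (Hsafe t Hn) as [m [Hp Hall]].
    destruct (H P CT t m Hp Hs) as [CS [t' [s [Hp' [Hrel HsS]]]]].
    apply (Hall t' Hp'). apply Hsub. exists s. split; auto. exact (Hr CS s HsS).
  - intros H P piT Hsafe Hr CT t Hs.
    apply NNPP; intro Hn.
    destruct (Hsafe t Hn) as [m [Hp Hall]].
    destruct (H P CT t m Hp Hs) as [CS [t' [s [Hp' [Hrel HsS]]]]].
    apply (Hall t' Hp'). exact (Hr CS s HsS t' Hrel).
  - intros H P CT t m Hp Hs.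
    apply NNPP; intro Hn.
    assert (Hr : rsatS (c:=c) P (sigma_img rel (fun t' => ~ prefix m t'))).
    { intros C s HsS t' Hrel Hp'. apply Hn. exists C, t', s. auto. }
    exact (H P _ (notpref_safety m) Hr CT t Hs Hp).
Qed.
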